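(* For every $m\geq 0$ the following three families of objects are in bijection: (i) rooted bicolored chord diagrams with $m$ chords; (ii) bicolored ordered matchings of size $2m$; (iii) pairs $(\mathcal M_\bullet,S)$ where $\mathcal M_\bullet$ is a rooted map with $m$ edges (up to isomorphism of rooted maps) and $S$ is a quasi-tree of $\mathcal M_\bullet$.
   Context: A map is a triple $\mathcal M=(B,\sigma,\alpha)$ with $B$ finite, $\sigma,\alpha\in\mathrm{Sym}(B)$, $\alpha$ a fixed-point-free involution, $\langle\sigma,\alpha\rangle$ transitive on $B$. Edges are the cycles of $\alpha$; $\underline b=\{b,\alpha(b)\}$. A rooted map is a pair $(\mathcal M,b_\bullet)$ with $b_\bullet\in B$; rooted maps $(B,\sigma,\alpha,b_\bullet)$, $(B',\sigma',\alpha',b'_\bullet)$ are isomorphic if there is a bijection $\phi:B\to B'$ with $\sigma'=\phi\sigma\phi^{-1}$, $\alpha'=\phi\alpha\phi^{-1}$, $\phi(b_\bullet)=b'_\bullet$ (pairs $(\mathcal M_\bullet,S)$ are taken up to such isomorphisms, carrying $S$ along). The tour of a set $F$ of edges is $\tau$ with $\tau(b)=\sigma(\alpha(b))$ if $\underline b\in F$ and $\tau(b)=\sigma(b)$ otherwise; a quasi-tree is a set of edges whose tour is a single cycle on $B$. A chord diagram with $m$ chords is a set of $2m$ points on a circle partitioned into $m$ pairs (chords); it is bicolored if each chord has color $1$ or $2$, and rooted if one of the $2m$ points is distinguished; rooted bicolored chord diagrams are considered up to orientation-preserving homeomorphisms of the circle respecting chords, colors and root. A bicolored ordered matching of size $2m$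 is a perfect matching of $\{1,\dots,2m\}$ each of whose $m$ pairs is colored $1$ or $2$. *)

(* Defs.v *)
From mathcomp Require Import all_boot all_fingroup.
Set Implicit Arguments. Unset Strict Implicit. Unset Printing Implicit Defensive.

Definition fpf_involution (T : finType) (a : T -> T) : Prop :=
  forall x, a x <> x /\ a (a x) = x.

Lemma rotn_proof (n k : nat) (i : 'I_n) : (i + k) %% n < n.
Proof. by rewrite ltn_pmod // (leq_ltn_trans (leq0n i) (ltn_ord i)). Qed.
Definition rotn (n k : nat) (i : 'I_n) : 'I_n := Ordinal (rotn_proof k i).

(* (i) rooted bicolored chord diagrams with m chords: the 2m points are placed
   counterclockwise at positions 0,...,2m-1 of the circle; [cd_chord i] is the
   other endpoint of the chord through i; colours: true = 1, false = 2.
   Convention: for m = 0 there are no points and the root is None (the empty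
   diagram); for m > 0 the root is Some point. *)
Record chord_diagram (m : nat) := ChordDiagram {
  cd_chord : {perm 'I_(2 * m)};
  cd_col : {ffun 'I_(2 * m) -> bool};
  cd_root : option 'I_(2 * m);
  cd_chordP : fpf_involution cd_chord;
  cd_colP : forall i, cd_col (cd_chord i) = cd_col i;
  cd_rootP : cd_root = None <-> m = 0 }.

(* Isomorphism of rooted bicolored chord diagrams: an orientation-preserving
   homeomorphism of the circle carrying points to points acts on the labels
   as a rotation. *)
Definition cd_iso (m : nat) (D D' : chord_diagram m) : Prop :=
  exists k : nat,
    (forall i, cd_chord D' (rotn k i) = rotn k (cd_chord D i)) /\
    (forall i, cd_col D' (rotn k i) = cd_col D i) /\
    cd_root D' = omap (rotn k) (cd_root D).

Record ordmatch (m : nat) := OrdMatch {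
  om_match : {perm 'I_(2 * m)};
  om_col : {ffun 'I_(2 * m) -> bool};
  om_matchP : fpf_involution om_match;
  om_colP : forall i, om_col (om_match i) = om_col i }.

Definition om_same (m : nat) (x y : ordmatch m) : Prop :=
  om_match x = om_match y /\ om_col x = om_col y.

(* Tour of the set of edges F, given as the set S of darts b with
   underline b in F (S is closed under alpha). *)
Definition tour (T : finType) (s a : T -> T) (S : {set T}) (b : T) : T :=
  if b \in S then s (a b) else s b.

Record rmap_qt (m : nat) := RMapQT {
  rm_sigma : {perm 'I_(2 * m)};
  rm_alpha : {perm 'I_(2 * m)};
  rm_root : option 'I_(2 * m);
  rm_S : {set 'I_(2 * m)};
  rm_alphaP : fpf_involution rm_alpha;
  rm_transP : forall b, orbit 'P%act <<[set rm_sigma; rm_alpha]>> b = [set: 'I_(2 * m)];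
  rm_rootP : rm_root = None <-> m = 0;
  rm_SP : forall b, (rm_alpha b \in rm_S) = (b \in rm_S);
  rm_quasi_tree : forall b b', fconnect (tour rm_sigma rm_alpha rm_S) b b' }.

Definition rm_iso (m : nat) (M M' : rmap_qt m) : Prop :=
  exists phi : {perm 'I_(2 * m)},
    (forall b, rm_sigma M' (phi b) = phi (rm_sigma M b)) /\
    (forall b, rm_alpha M' (phi b) = phi (rm_alpha M b)) /\
    rm_root M' = omap phi (rm_root M) /\
    rm_S M' = phi @: rm_S M.

Definition class_bij (X Y : Type) (RX : X -> X -> Prop) (RY : Y -> Y -> Prop)
  (f : X -> Y) : Prop :=
  (forall x x', RX x x' <-> RY (f x) (f x')) /\ (forall y, exists x, RY (f x) y).

(* Main.v *)
Require Import Defs.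
From mathcomp Require Import all_boot all_fingroup.
From mathcomp Require Import zify.
Set Implicit Arguments. Unset Strict Implicit. Unset Printing Implicit Defensive.

Section Rot.
Variable n : nat.
Implicit Types i : 'I_n.

Lemma ord_pos i : 0 < n. Proof. exact: leq_ltn_trans (leq0n _) (ltn_ord i). Qed.

Lemma rotnD a b i : rotn a (rotn b i) = rotn (b + a) i.
Proof. by apply/val_inj => /=; rewrite modnDml addnA. Qed.
Lemma rotn_mod a i : rotn (a %% n) i = rotn a i.
Proof. by apply/val_inj => /=; rewrite modnDmr. Qed.
Lemma rotn0 i : rotn 0 i = i.
Proof. by apply/val_inj => /=; rewrite addn0 modn_small. Qed.
Lemma rotnn i : rotn n i = i.
Proof. by apply/val_inj => /=; rewrite modnDr modn_small. Qed.
Lemma rotnK r : r <= n -> cancel (@rotn n r) (@rotn n (n - r)).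
Proof. by move=> hr i; rewrite rotnD subnKC // rotnn. Qed.
Lemma rotnKV r : r <= n -> cancel (@rotn n (n - r)) (@rotn n r).
Proof. by move=> hr i; rewrite rotnD subnK // rotnn. Qed.
Lemma rotn_inj k : injective (@rotn n k).
Proof.
move=> i j; have hn := ord_pos i; rewrite -!(rotn_mod k).
exact: (can_inj (rotnK (ltnW (ltn_pmod k hn)))).
Qed.
Lemma rotn_iter k i : iter k (rotn 1) i = rotn k i.
Proof. by elim: k => [|k IH]; rewrite ?rotn0 // iterS IH rotnD addn1. Qed.
Lemma rot_shift' k r (c : 'I_n) : r <= n -> rotn (n - (r + k) %% n) (rotn k c) = rotn (n - r) c.
Proof.
move=> hr; rewrite -{1}(rotnKV hr c).
set d := rotn (n - r) c.
rewrite (rotnD k r d) -(rotn_mod (r + k)) rotnK //.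
exact: ltnW (ltn_pmod _ (ord_pos c)).
Qed.
End Rot.

Lemma perm0_eq (n : nat) (s t : {perm 'I_n}) : n = 0 -> s = t.
Proof. by move=> h; apply/permP => i; have := ord_pos i; lia. Qed.

Section Part1.
Variable m : nat.
Local Notation n := (2 * m).

Definition cd_r (D : chord_diagram m) : nat := if cd_root D is Some r then val r else 0.
Lemma cd_r_le D : cd_r D <= n.
Proof. rewrite /cd_r; case: (cd_root D) => [r|]; [exact: ltnW (ltn_ord r) | exact: leq0n]. Qed.

Definition cdM D i := rotn (n - cd_r D) (cd_chord D (rotn (cd_r D) i)).
Lemma cdM_inj D : injective (cdM D).
Proof. by move=> i j; rewrite /cdM => /rotn_inj /perm_inj /rotn_inj. Qed.
Definition cdMp D := perm (@cdM_inj D).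
Lemma cdMpE D i : cdMp D i = cdM D i. Proof. by rewrite permE. Qed.

Lemma cdMp_fpf D : fpf_involution (cdMp D).
Proof.
move=> i; rewrite !cdMpE /cdM; have hr := cd_r_le D; split.
  move/(congr1 (rotn (cd_r D))); rewrite rotnKV // => h.
  by have := (cd_chordP D (rotn (cd_r D) i)).1.
by rewrite rotnKV // (cd_chordP D _).2 rotnK.
Qed.

Definition cdC D := [ffun i => cd_col D (rotn (cd_r D) i)].
Lemma cdC_colP D i : cdC D (cdMp D i) = cdC D i.
Proof. by rewrite !ffunE cdMpE /cdM rotnKV ?cd_r_le // cd_colP. Qed.

Definition fD D : ordmatch m := OrdMatch (cdMp_fpf D) (@cdC_colP D).

Lemma root_some (D : chord_diagram m) (i : 'I_n) : exists r, cd_root D = Some r.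
Proof.
case h: (cd_root D) => [r|]; first by exists r.
have := ord_pos i; move/(cd_rootP D): h => ->; by [].
Qed.

Definition root0 : option 'I_n := insub 0.
Lemma root0P : root0 = None <-> m = 0.
Proof. rewrite /root0; case: insubP => [u hu _|hn]; split => //; lia. Qed.

Lemma part1 : exists f : chord_diagram m -> ordmatch m, class_bij (@cd_iso m) (@om_same m) f.
Proof.
exists fD; split.
  move=> D D'; split.
    move=> [k [hc [hcol hr]]]; split.
      apply/permP => i; have [r hD] := root_some D i.
      rewrite !cdMpE /cdM /cd_r hr hD /= (rotn_mod (r + k)) -rotnD hc.
      by rewrite rot_shift' //; apply: ltnW.
    apply/ffunP => i; have [r hD] := root_some D i.
    by rewrite !ffunE /cd_r hr hD /= (rotn_mod (r + k)) -rotnD hcol.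
  move=> [hM hC] /=.
  case hD: (cd_root D) => [r|]; case hD': (cd_root D') => [r'|].
  - have hr : r <= n by apply: ltnW.
    exists (r' + (n - r)); split; [|split].
    + move=> i; have := congr1 (fun p : {perm _} => p (rotn (n - r) i)) hM.
      rewrite /= !cdMpE /cdM /cd_r hD hD' /= rotnKV // => /(congr1 (rotn r')).
      by rewrite rotnKV ?(ltnW (ltn_ord r')) // => h; rewrite [r' + _]addnC -!rotnD -h.
    + move=> i; have := congr1 (fun p : {ffun _} => p (rotn (n - r) i)) hC.
      by rewrite /= !ffunE /cd_r hD hD' /= rotnKV // rotnD addnC => ->.
    + rewrite hD hD' /=; congr Some; apply/val_inj => /=.
      by rewrite addnCA subnKC // modnDr modn_small.
  - by move/(cd_rootP D'): hD' => h; have := ltn_ord r; lia.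
  - by move/(cd_rootP D): hD => h; have := ltn_ord r'; lia.
  - exists 0; split; [|split]; first 1 last.
    + by move=> i; have := ord_pos i; move/(cd_rootP D): hD; lia.
    + by rewrite hD hD'.
    + by move=> i; have := ord_pos i; move/(cd_rootP D): hD; lia.
move=> x.
exists (ChordDiagram (om_matchP x) (om_colP x) root0P).
have h0 : cd_r (ChordDiagram (om_matchP x) (om_colP x) root0P) = 0.
  by rewrite /cd_r /= /root0; case: insubP => // u _ ->.
split.
  by apply/permP => i; rewrite cdMpE /cdM h0 subn0 rotnn rotn0.
by apply/ffunP => i; rewrite ffunE h0 rotn0.
Qed.
End Part1.

Lemma imset_permE (T : finType) (phi : {perm T}) (A B : {set T}) :
  (forall b, (phi b \in B) = (b \in A)) -> B = phi @: A.
Proof.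
move=> h; apply/setP => c; rewrite -(permKV phi c) mem_imset ?h //; exact: perm_inj.
Qed.

Lemma tour_conj (T : finType) (s a s' a' : T -> T) (phi : {perm T}) (S S' : {set T}) :
  (forall b, s' (phi b) = phi (s b)) -> (forall b, a' (phi b) = phi (a b)) ->
  S' = phi @: S -> forall b, tour s' a' S' (phi b) = phi (tour s a S b).
Proof.
move=> hs ha hS b; rewrite /tour hS mem_imset; last exact: perm_inj.
by case: ifP => _; rewrite ?ha hs.
Qed.

Lemma rotn_reach (n : nat) (b c : 'I_n) : c = iter (c + (n - b)) (rotn 1) b.
Proof.
rewrite rotn_iter; apply/val_inj => /=.
by rewrite addnCA subnKC ?(ltnW (ltn_ord b)) // modnDr modn_small.
Qed.

Section Part2.
Variable m : nat.
Local Notation n := (2 * m).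

Definition alp' (x : ordmatch m) (b : 'I_n) := if om_col x b then om_match x b else b.
Lemma alp'K x : involutive (alp' x).
Proof.
move=> b; rewrite /alp'; case h: (om_col x b).
  by rewrite om_colP h (om_matchP x b).2.
by rewrite h.
Qed.
Definition gsig (x : ordmatch m) (b : 'I_n) := rotn 1 (alp' x b).
Lemma gsig_inj x : injective (gsig x).
Proof. by move=> i j; rewrite /gsig => /rotn_inj /(can_inj (alp'K x)). Qed.
Definition gsigp (x : ordmatch m) := perm (@gsig_inj x).
Definition Sx (x : ordmatch m) := [set b | om_col x b].
Lemma gSP x b : (om_match x b \in Sx x) = (b \in Sx x).
Proof. by rewrite !inE om_colP. Qed.
Lemma gtour x : tour (gsigp x) (om_match x) (Sx x) =1 rotn 1.
Proof.
move=> b; rewrite /tour inE; case h: (om_col x b); rewrite permE /gsig /alp' ?om_colP h //.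
by rewrite (om_matchP x b).2.
Qed.
Lemma gqt x b b' : fconnect (tour (gsigp x) (om_match x) (Sx x)) b b'.
Proof.
rewrite (eq_fconnect (gtour x)) (rotn_reach b b'); exact: fconnect_iter.
Qed.
Lemma gtrans x b : orbit 'P%act <<[set gsigp x; om_match x]>> b = [set: 'I_n].
Proof.
set G := generated _.
have hs : forall s, s \in [set gsigp x; om_match x] ->
    forall d, d \in orbit 'P%act G b -> s d \in orbit 'P%act G b.
  move=> s hs d hd; apply: orbit_trans _ hd.
  exact: (mem_orbit 'P%act d (mem_gen hs)).
have ht : forall d, d \in orbit 'P%act G b ->
    tour (gsigp x) (om_match x) (Sx x) d \in orbit 'P%act G b.
  move=> d hd; rewrite /tour; case: ifP => _; apply: (hs); rewrite ?set21 ?set22 //.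
  by apply: (hs); rewrite ?set21 ?set22.
apply/setP => c; rewrite inE (rotn_reach b c) -(eq_iter (gtour x)).
elim: (c + _) => [|k IH]; first exact: orbit_refl.
by rewrite iterS; apply: (ht).
Qed.

Definition gx (x : ordmatch m) : rmap_qt m :=
  @RMapQT m (gsigp x) (om_match x) (root0 m) (Sx x) (om_matchP x) (gtrans x)
    (root0P m) (gSP x) (gqt x).

Lemma root0_some (b : 'I_n) : exists o : 'I_n, root0 m = Some o /\ val o = 0.
Proof.
rewrite /root0; case: insubP => [u _ hu|hn]; first by exists u.
by have := ord_pos b; rewrite (negbTE hn).
Qed.

Lemma part2 : exists g : ordmatch m -> rmap_qt m, class_bij (@om_same m) (@rm_iso m) g.
Proof.
exists gx; split.
  move=> x y; split.
    move=> [hM hC]; exists (1%g : {perm _}); split; [|split; [|split]] => /=.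
    - by move=> b; rewrite !perm1 !permE /gsig /alp' hM hC.
    - by move=> b; rewrite !perm1 hM.
    - by case: (root0 m) => //= r; rewrite perm1.
    - by apply: imset_permE => b; rewrite perm1 !inE hC.
  move=> [phi [hs [ha [hr hS]]]] /=.
  have phi_id : forall b, phi b = b.
    move=> b; have [o [ho ho0]] := root0_some b.
    move: hr; rewrite /= ho /= => -[ho'].
    have ht := tour_conj hs ha hS.
    have hk : forall k, phi (rotn k o) = rotn k o.
      elim=> [|k IH]; first by rewrite !rotn0.
      by rewrite -[k.+1]addn1 -rotnD -{2}IH -(gtour y (phi (rotn k o))) ht gtour.
    have -> : b = rotn b o by apply/val_inj => /=; rewrite ho0 add0n modn_small.
    exact: hk.
  split.
    by apply/permP => b; have := ha b; rewrite /= !phi_id => ->.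
  apply/ffunP => b.
  have := (congr1 (fun A : {set _} => phi b \in A) hS) => /=.
  rewrite mem_imset; last exact: perm_inj.
  by rewrite phi_id !inE => ->.
move=> M.
case hR: (rm_root M) => [r|]; last first.
  have hm := (rm_rootP M).1 hR.
  have fp : fpf_involution (1%g : {perm 'I_n}) by move=> i; have := ord_pos i; lia.
  have cp : forall i, [ffun _ : 'I_n => false] ((1%g : {perm 'I_n}) i) = [ffun _ : 'I_n => false] i.
    by move=> i; rewrite !ffunE.
  exists (OrdMatch fp cp), (1%g : {perm _}); split; [|split; [|split]].
  - by move=> i; have := ord_pos i; lia.
  - by move=> i; have := ord_pos i; lia.
  - by rewrite hR /= ((root0P m).2 hm).
  - by apply/setP => i; have := ord_pos i; lia.
set tau := tour (rm_sigma M) (rm_alpha M) (rm_S M).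
have tau_inj : injective tau.
  move=> b c; rewrite /tau /tour; case: ifP => hb; case: ifP => hc.
  - by move/perm_inj => h; rewrite -((rm_alphaP M b).2) h ((rm_alphaP M c).2).
  - by move/perm_inj => h; move: hb; rewrite -(rm_SP M) h hc.
  - by move/perm_inj => h; move: hc; rewrite -(rm_SP M) -h hb.
  - exact: perm_inj.
have hord : fingraph.order tau r = n.
  apply/eqP; rewrite eqn_leq; apply/andP; split.
    rewrite -size_orbit -[X in _ <= X](size_enum_ord n); apply: uniq_leq_size; first exact: orbit_uniq.
    by move=> d; rewrite mem_enum.
  rewrite -size_orbit -[X in X <= _](size_enum_ord n); apply: uniq_leq_size; first exact: enum_uniq.
  by move=> d _; rewrite -fconnect_orbit; apply: rm_quasi_tree.
pose phi := fun i : 'I_n => iter i tau r.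
have phi_inj : injective phi.
  move=> i j; rewrite /phi => h; apply/val_inj/eqP.
  have hi : i < size (fingraph.orbit tau r) by rewrite size_orbit hord.
  have hj : j < size (fingraph.orbit tau r) by rewrite size_orbit hord.
  rewrite -(nth_uniq r hi hj (orbit_uniq tau r)) /fingraph.orbit.
  by rewrite !nth_traject ?h ?hord.
pose P := perm phi_inj.
have PE : forall i, P i = iter i tau r by move=> i; rewrite permE.
have key : forall c, P (rotn 1 c) = tau (P c).
  move=> c; rewrite !PE /= -iterS.
  have := ltn_ord c; rewrite leq_eqVlt => /orP[/eqP hc|hc].
    have -> : (c + 1) %% n = 0 by rewrite addn1 hc modnn.
    by rewrite hc; have := iter_order tau_inj r; rewrite hord => ->.
  by rewrite addn1 modn_small.
pose A := (P * rm_alpha M * P^-1)%g.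
have AE : forall i, A i = P^-1%g (rm_alpha M (P i)) by move=> i; rewrite !permM.
have fpA : fpf_involution A.
  move=> i; rewrite !AE; split.
    move/(congr1 P); rewrite permKV => h; exact: (rm_alphaP M (P i)).1 h.
  by rewrite permKV (rm_alphaP M _).2 permK.
pose C := [ffun i => P i \in rm_S M].
have cpA : forall i, C (A i) = C i by move=> i; rewrite !ffunE AE permKV rm_SP.
exists (OrdMatch fpA cpA), P; split; [|split; [|split]] => /=.
- move=> b; rewrite [gsigp _ b]permE /gsig key /alp' /= ffunE.
  case: ifP => h; first by rewrite AE permKV /tau /tour rm_SP h (rm_alphaP M _).2.
  by rewrite /tau /tour h.
- by move=> b; rewrite AE permKV.
- have [o [-> ho]] := root0_some r.
  by rewrite hR /= PE ho.
- by apply: imset_permE => b; rewrite !inE ffunE.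
Qed.
End Part2.

Theorem lemma12 (m : nat) :
  (exists f : chord_diagram m -> ordmatch m, class_bij (@cd_iso m) (@om_same m) f) /\
  (exists g : ordmatch m -> rmap_qt m, class_bij (@om_same m) (@rm_iso m) g).
Proof. split; [exact: part1 | exact: part2]. Qed.
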